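(* Let $\mathcal{M}$ be an ergodic (not necessarily reversible) Markov chain on a finite state space. Then $$\Phi(\mathcal{M})\ \ge\ \frac{\frac12-\frac{1}{2e}}{\tau(\mathcal{M},\frac{1}{2e})}.$$
   Context: A (discrete-time) Markov chain on a finite state space $\Omega$ with transition matrix $P$ is ergodic if irreducible and aperiodic; it then has a unique stationary distribution $\pi>0$. Variation distance: $\|\theta_1-\theta_2\|=\frac12\sum_i|\theta_1(i)-\theta_2(i)|$. Mixing time: $\tau_x(\mathcal{M},\varepsilon)=\min\{t>0 \text{ integer}: \|P^{t'}(x,\cdot)-\pi\|\le\varepsilon \ \forall t'\ge t\}$, $\tau(\mathcal{M},\varepsilon)=\max_x\tau_x(\mathcal{M},\varepsilon)$. Conductance: for $S\subset\Omega$ with $0<\pi(S)<1$ and $\bar S=\Omega\setminus S$, $\Phi_S(\mathcal{M})=\dfrac{\sum_{i\in S}\sum_{j\in\bar S}\pi(i)P(i,j)+\sum_{i\in\bar S}\sum_{j\in S}\pi(i)P(i,j)}{2\pi(S)\pi(\bar S)}$, and $\Phi(\mathcal{M})=\min_S\Phi_S(\mathcal{M})$ over all such $S$. *)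

(* Defs.v *)
From HB Require Import structures.
From mathcomp Require Import all_boot all_order all_algebra.
From mathcomp Require Import boolp reals sequences exp.
Set Implicit Arguments. Unset Strict Implicit. Unset Printing Implicit Defensive.
Import Order.TTheory GRing.Theory Num.Theory.
Local Open Scope ring_scope.

Section Markov.
Variables (R : realType) (T : finType).

Definition stochastic (P : T -> T -> R) :=
  (forall i j, 0 <= P i j) /\ (forall i, \sum_(j : T) P i j = 1).

Fixpoint Ppow (P : T -> T -> R) (t : nat) : T -> T -> R :=
  match t with
  | 0 => fun i j => (i == j)%:R
  | t'.+1 => fun i j => \sum_(k : T) Ppow P t' i k * P k j
  end.

Definition irreducible (P : T -> T -> R) :=
  forall i j, exists t, 0 < Ppow P t i j.

(* the period of every state (gcd of its positive return times) is 1 *)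
Definition aperiodic (P : T -> T -> R) :=
  forall i (d : nat), (forall t : nat, (0 < t)%N -> 0 < Ppow P t i i -> (d %| t)%N) ->
    d = 1%N.

Definition ergodic (P : T -> T -> R) :=
  [/\ stochastic P, irreducible P & aperiodic P].

Definition stationary (P : T -> T -> R) (pi : T -> R) :=
  [/\ forall i, 0 <= pi i, \sum_(i : T) pi i = 1 &
      forall j, \sum_(i : T) pi i * P i j = pi j].

Definition var_dist (th1 th2 : T -> R) : R :=
  2^-1 * \sum_(i : T) `|th1 i - th2 i|.

Definition mixes_by (P : T -> T -> R) (pi : T -> R) (eps : R) (x : T) (t : nat) :=
  (0 < t)%N /\ forall t' : nat, (t <= t')%N -> var_dist (Ppow P t' x) pi <= eps.

(* tau_x(M, eps): the least such t (0 if none exists, which never happens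
   for ergodic chains and eps > 0) *)
Definition mixing_time_x (P : T -> T -> R) (pi : T -> R) (eps : R) (x : T) : nat :=
  match pselect (exists t, (fun t => `[< mixes_by P pi eps x t >]) t) with
  | left h => ex_minn h
  | right _ => 0%N
  end.

Definition mixing_time (P : T -> T -> R) (pi : T -> R) (eps : R) : nat :=
  \max_(x : T) mixing_time_x P pi eps x.

Definition prob (pi : T -> R) (S : {set T}) : R := \sum_(i in S) pi i.

Definition conductance_S (P : T -> T -> R) (pi : T -> R) (S : {set T}) : R :=
  (\sum_(i in S) \sum_(j in ~: S) pi i * P i j
   + \sum_(i in ~: S) \sum_(j in S) pi i * P i j)
  / (2 * prob pi S * prob pi (~: S)).

End Markov.

(* Main.v *)
Require Import Defs.
From HB Require Import structures.
From mathcomp Require Import all_boot all_order all_algebra.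
From mathcomp Require Import boolp reals sequences exp.
From mathcomp Require Import zify ring lra.
Import Order.TTheory GRing.Theory Num.Theory.
Set Implicit Arguments. Unset Strict Implicit. Unset Printing Implicit Defensive.

Lemma eventually_all (A : nat -> bool) : A 0 ->
  (forall a b, A a -> A b -> A (a + b)) ->
  (forall d, (forall t, 0 < t -> A t -> d %| t) -> d = 1) ->
  exists N, forall t, N <= t -> A t.
Proof.
move=> A0 Aadd ap.
have Amul : forall k x, A x -> A (k * x).
  by move=> k x Ax; elim: k => [|k IH] //; rewrite mulSn; apply: Aadd.
have [a [a0 Aa]] : exists a, 0 < a /\ A a.
  case: (EM (exists a, 0 < a /\ A a)) => // h; exfalso.
  have := ap 0%N; move=> H; have : 0%N = 1%N; last by [].
  apply: H => t t0 At; exfalso; apply: h; by exists t.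
pose Dp := fun d => (0 < d) && `[< exists q, A q /\ A (q + d) >].
have exD : exists d, Dp d.
  exists a; apply/andP; split => //; apply/asboolP; exists a; split => //; exact: Aadd.
case: (ex_minnP exD) => d /andP [d0 /asboolP [q [Aq Aqd]]] mind.
have d1 : d = 1%N.
  apply: ap => t t0 At.
  have dt : d <= t.
    apply: mind; apply/andP; split => //; apply/asboolP; exists t; split => //; exact: Aadd.
  rewrite /dvdn; apply/eqP.
  have def := divn_eq t d.
  have rlt : t %% d < d by rewrite ltn_pmod.
  have k1 : 0 < t %/ d by rewrite divn_gt0.
  case: (posnP (t %% d)) => // r0.
  have : d <= t %% d.
    apply: mind; apply/andP; split => //; apply/asboolP.
    exists (t %/ d * (q + d)); split; first exact: Amul.
    have -> : (t %/ d * (q + d) + t %% d = t + t %/ d * q)%N.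
      rewrite mulnDr; lia.
    apply: Aadd => //; exact: Amul.
  by rewrite leqNgt rlt.
move: Aqd; rewrite d1 => Aq1.
case: (posnP q) => [q0|qpos].
  exists 1%N => t _; rewrite -(muln1 t); apply: Amul; by move: Aq1; rewrite q0.
exists (q * q)%N => t tq.
have def := divn_eq t q.
have rlt : t %% q < q by rewrite ltn_pmod.
set k := t %/ q in def; set r := t %% q in def rlt.
have kq : q <= k by nia.
have -> : t = ((k - r) * q + r * (q + 1))%N by nia.
by apply: Aadd; apply: Amul.
Qed.

Local Open Scope ring_scope.

Section Basic.
Variables (R : realType) (T : finType) (P : T -> T -> R).
Hypothesis sP : stochastic P.

Lemma term_le_sum (F : T -> R) k : (forall i, 0 <= F i) -> F k <= \sum_i F i.
Proof. by move=> h; rewrite (bigD1 k) //= lerDl sumr_ge0. Qed.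

Lemma sum_delta (F : T -> R) j : \sum_k F k * (k == j)%:R = F j.
Proof.
rewrite (bigD1 j) //= eqxx mulr1 big1 ?addr0 // => k /negbTE ->; by rewrite mulr0.
Qed.

Lemma sum_delta' (F : T -> R) j : \sum_k (j == k)%:R * F k = F j.
Proof.
rewrite (bigD1 j) //= eqxx mul1r big1 ?addr0 // => k; rewrite eq_sym => /negbTE ->; by rewrite mul0r.
Qed.

Lemma Ppow_ge0 t i j : 0 <= Ppow P t i j.
Proof.
elim: t i j => [|t IH] i j /=; first by rewrite ler0n.
by apply: sumr_ge0 => k _; apply: mulr_ge0 => //; case: sP.
Qed.

Lemma Ppow_sum1 t i : \sum_j Ppow P t i j = 1.
Proof.
elim: t i => [|t IH] i /=; first by rewrite (bigD1 i) //= eqxx big1 ?addr0 // => j; rewrite eq_sym => /negbTE ->.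
rewrite exchange_big /=. rewrite -[RHS](IH i); apply: eq_bigr => k _.
by rewrite -mulr_sumr; case: sP => _ ->; rewrite mulr1.
Qed.

Lemma PpowD a b i j : Ppow P (a + b) i j = \sum_k Ppow P a i k * Ppow P b k j.
Proof.
elim: b j => [|b IH] j; first by rewrite addn0 /= sum_delta.
rewrite addnS /=.
under eq_bigr => l _ do rewrite IH mulr_suml.
rewrite exchange_big /=; apply: eq_bigr => k _.
by rewrite mulr_sumr; apply: eq_bigr => l _; rewrite mulrA.
Qed.

Lemma Ppow_stat pi t j : stationary P pi -> \sum_i pi i * Ppow P t i j = pi j.
Proof.
case=> _ _ st; elim: t j => [|t IH] j /=; first by rewrite sum_delta.
under eq_bigr => i _ do rewrite mulr_sumr.
rewrite exchange_big /= -[RHS]st; apply: eq_bigr => k _.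
by rewrite -IH mulr_suml; apply: eq_bigr => i _; rewrite mulrA.
Qed.

Lemma Ppow_mul_ge a b i k j : Ppow P a i k * Ppow P b k j <= Ppow P (a + b) i j.
Proof.
rewrite PpowD; have := @term_le_sum (fun k => Ppow P a i k * Ppow P b k j) k; apply.
by move=> l; apply: mulr_ge0; apply: Ppow_ge0.
Qed.

End Basic.

Section Conv.
Variables (R : realType) (T : finType) (P : T -> T -> R).

Lemma primitive : ergodic P -> exists m, forall x y, 0 < Ppow P m x y.
Proof.
case=> sP irr ap.
have hN : forall i, exists N, forall t, (N <= t)%N -> 0 < Ppow P t i i.
  move=> i; apply: (eventually_all (A := fun t => 0 < Ppow P t i i)).
  - by rewrite /= eqxx ltr01.
  - move=> a b ha hb; apply: lt_le_trans (Ppow_mul_ge sP a b i i i); exact: mulr_gt0.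
  - exact: ap i.
case: (choice hN) => N hN'.
case: (choice (P := fun (p : T * T) t => 0 < Ppow P t p.1 p.2) (fun p => irr p.1 p.2)) => r hr.
exists (\max_(i : T) N i + \max_(p : T * T) r p)%N => x y.
have rle : (r (x, y) <= \max_(p : T * T) r p)%N by apply: (leq_bigmax (x, y)).
have Nle : (N x <= \max_(i : T) N i)%N by apply: (leq_bigmax x).
set M1 := (\max_(i : T) N i)%N in Nle *; set M2 := (\max_(p : T * T) r p)%N in rle *.
have -> : (M1 + M2 = (M1 + M2 - r (x, y)) + r (x, y))%N by lia.
apply: lt_le_trans (Ppow_mul_ge sP _ _ x x y); apply: mulr_gt0.
  apply: hN'; lia.
exact: (hr (x, y)).
Qed.

Lemma contract (w : T -> R) (Q : T -> T -> R) d :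
  \sum_k w k = 0 -> (forall k j, d <= Q k j) -> (forall k, \sum_j Q k j = 1) ->
  \sum_j `|\sum_k w k * Q k j| <= (1 - #|T|%:R * d) * \sum_k `|w k|.
Proof.
move=> hw hd hQ.
have e : forall j, \sum_k w k * Q k j = \sum_k w k * (Q k j - d).
  move=> j; under [RHS]eq_bigr => k _ do rewrite mulrBr.
  by rewrite sumrB -mulr_suml hw mul0r subr0.
apply: (@le_trans _ _ (\sum_j \sum_k `|w k| * (Q k j - d))).
  apply: ler_sum => j _; rewrite e; apply: le_trans (ler_norm_sum _ _ _) _.
  apply: ler_sum => k _; rewrite normrM [`|Q k j - d|]ger0_norm // subr_ge0; exact: hd.
rewrite exchange_big /= mulrC mulr_suml; apply: ler_sum => k _.
rewrite -mulr_sumr sumrB hQ sumr_const mulrC.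
rewrite mulr_natl mulrC; exact: lexx.
Qed.

Lemma lower_bound (F : T -> T -> R) : (forall x y, 0 < F x y) ->
  exists d, 0 < d /\ forall x y, d <= F x y.
Proof.
move=> hF; exists (1 + \sum_(p : T * T) (F p.1 p.2)^-1)^-1.
have s0 : 0 <= \sum_(p : T * T) (F p.1 p.2)^-1.
  by apply: sumr_ge0 => p _; rewrite invr_ge0 ltW.
split; first by rewrite invr_gt0; lra.
move=> x y; rewrite -[F x y]invrK lef_pV2 ?posrE ?invr_gt0 ?hF //; last first.
  by lra.
apply: le_trans (_ : \sum_(p : T * T) (F p.1 p.2)^-1 <= _); last by lra.
by have := @term_le_sum R (T * T)%type (fun p => (F p.1 p.2)^-1) (x, y); apply => p; rewrite invr_ge0 ltW.
Qed.

Lemma bern (s : R) k : 0 <= s <= 1 -> (1 - s) ^+ k * (1 + k%:R * s) <= 1.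
Proof.
case/andP=> s0 s1; elim: k => [|k IH]; first by rewrite expr0 mul0r addr0 mulr1.
apply: le_trans IH; rewrite exprSr -mulrA; apply: ler_wpM2l; first by rewrite exprn_ge0 // subr_ge0.
have k0 : 0 <= (k%:R : R) by rewrite ler0n. nra.
Qed.

Lemma converge pi : ergodic P -> stationary P pi -> forall eps, 0 < eps -> forall x,
  exists N, forall t, (N <= t)%N -> var_dist (Ppow P t x) pi <= eps.
Proof.
move=> erg st eps eps0 x.
have sP : stochastic P by case: erg.
have [m hm] := primitive erg.
have [d [d0 hd]] := lower_bound hm.
pose D t := \sum_j `|Ppow P t x j - pi j|.
have Dstep : forall t s e, (forall k j, e <= Ppow P s k j) -> D (t + s)%N <= (1 - #|T|%:R * e) * D t.
  move=> t s e he; rewrite /D.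
  have eqj : forall j, Ppow P (t + s) x j - pi j = \sum_k (Ppow P t x k - pi k) * Ppow P s k j.
    move=> j; rewrite PpowD -(Ppow_stat s j st) -sumrB.
    by apply: eq_bigr => k _; rewrite mulrBl.
  under eq_bigr => j _ do rewrite eqj.
  apply: contract => //; last by move=> k; exact: Ppow_sum1.
  by case: st => _ sp1 _; rewrite sumrB Ppow_sum1 // sp1 subrr.
have Dmono : forall t s, D (t + s)%N <= D t.
  by move=> t s; have := Dstep t s 0 (fun k j => Ppow_ge0 sP s k j); rewrite mulr0 subr0 mul1r.
have D2 : forall t, D t <= 2.
  move=> t; rewrite /D; apply: le_trans (_ : \sum_j (Ppow P t x j + pi j) <= _).
    apply: ler_sum => j _; apply: le_trans (ler_normB _ _) _.
    rewrite !ger0_norm //; first by case: st.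
    exact: Ppow_ge0.
  by case: st => _ sp1 _; rewrite big_split /= Ppow_sum1 // sp1.
pose s := #|T|%:R * d; pose c := 1 - s.
have nT : (0 < #|T|)%N by apply/card_gt0P; exists x.
have s0 : 0 < s by rewrite /s mulr_gt0 // ltr0n.
have s1 : s <= 1.
  rewrite /s mulr_natl -sumr_const -(Ppow_sum1 sP m x); apply: ler_sum => j _; exact: hd.
have c0 : 0 <= c by rewrite /c subr_ge0.
have Diter : forall k, D (k * m)%N <= c ^+ k * D 0%N.
  elim=> [|k IH]; first by rewrite mul0n expr0 mul1r.
  rewrite mulSnr; apply: le_trans (Dstep _ _ _ hd) _.
  by rewrite exprS -mulrA; apply: ler_wpM2l.
pose k := Num.Def.archi_bound ((s * eps)^-1).
have hk : (s * eps)^-1 < k%:R by apply: archi_boundP; rewrite invr_ge0 ltW // mulr_gt0.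
have hk' : 1 < k%:R * (s * eps).
  by move: hk; rewrite -[X in X < _]mul1r ltr_pdivrMr // mulr_gt0.
have hb : (1 - s) ^+ k * (1 + k%:R * s) <= 1 by apply: bern; rewrite (ltW s0) s1.
have ck : c ^+ k <= eps.
  have ck0 : 0 <= c ^+ k by rewrite exprn_ge0.
  rewrite -/c in hb; nra.
exists (k * m)%N => t tN.
rewrite /var_dist -/(D t).
have -> : t = (k * m + (t - k * m))%N by lia.
apply: le_trans (_ : 2^-1 * (c ^+ k * 2) <= _).
  rewrite ler_wpM2l ?invr_ge0 ?ler0n //.
  apply: le_trans (Dmono _ _) _; apply: le_trans (Diter k) _.
  by apply: ler_wpM2l => //; rewrite exprn_ge0.
by rewrite mulrC -mulrA mulfV ?mulr1 // pnatr_eq0.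
Qed.
End Conv.

Section Main.
Variables (R : realType) (T : finType) (P : T -> T -> R) (pi : T -> R).
Hypotheses (erg : ergodic P) (st : stationary P pi).

Let sP : stochastic P. Proof. by case: erg. Qed.

Lemma mix_ok eps x t : 0 < eps -> (mixing_time_x P pi eps x <= t)%N ->
  var_dist (Ppow P t x) pi <= eps.
Proof.
move=> eps0; rewrite /mixing_time_x; case: pselect => [h|hn].
  by case: (ex_minnP h) => n /asboolP [_ hn] _ le; apply: hn.
exfalso; apply: hn; have [N hN] := converge erg st eps0 x.
exists N.+1; apply/asboolP; split => // t' le; apply: hN; lia.
Qed.

Lemma split_sum (F : T -> R) (S : {set T}) :
  \sum_j F j = \sum_(j in S) F j + \sum_(j in ~: S) F j.
Proof.
rewrite (bigID (mem S)) /=; congr (_ + _); apply: eq_bigl => j; by rewrite in_setC.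
Qed.

Lemma flow (S : {set T}) :
  \sum_(i in S) \sum_(j in ~: S) pi i * P i j = \sum_(i in ~: S) \sum_(j in S) pi i * P i j.
Proof.
case: st => _ _ hst.
have e1 : \sum_(i in S) pi i = \sum_(i in S) \sum_(j in S) pi i * P i j
     + \sum_(i in S) \sum_(j in ~: S) pi i * P i j.
  rewrite -big_split /=; apply: eq_bigr => i _.
  rewrite -split_sum -mulr_sumr; by case: sP => _ ->; rewrite mulr1.
have e2 : \sum_(j in S) pi j = \sum_(i in S) \sum_(j in S) pi i * P i j
     + \sum_(i in ~: S) \sum_(j in S) pi i * P i j.
  rewrite (exchange_big _ _ _ (mem S)) /= (exchange_big _ _ _ (mem (~: S))) /=.
  rewrite -big_split /=; apply: eq_bigr => j _; by rewrite -split_sum hst.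
move: e1 e2; lra.
Qed.

Definition fS (S : {set T}) t j := \sum_(x in S) pi x * Ppow P t x j.

Lemma fS_ge0 S t j : 0 <= fS S t j.
Proof.
apply: sumr_ge0 => x _; apply: mulr_ge0; [by case: st | exact: Ppow_ge0].
Qed.

Lemma fS_step S t j : fS S t.+1 j = \sum_k fS S t k * P k j.
Proof.
rewrite /fS /=; under eq_bigr => x _ do rewrite mulr_sumr.
rewrite exchange_big /=; apply: eq_bigr => k _; rewrite mulr_suml.
by apply: eq_bigr => x _; rewrite mulrA.
Qed.

Lemma fS_le S t j : fS S t j <= pi j.
Proof.
case: st => pi0 _ hst.
elim: t j => [|t IH] j.
  rewrite /fS /=; case: (boolP (j \in S)) => jS.
    rewrite (bigD1 j) //= eqxx mulr1 big1 ?addr0 // => x /andP [_ /negbTE ->]; by rewrite mulr0.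
  rewrite big1 // => x xS; have -> : (x == j) = false.
    by apply/negbTE; apply: contraNneq jS => <-.
  by rewrite mulr0.
rewrite fS_step -hst; apply: ler_sum => k _; apply: ler_wpM2r; [by case: sP | exact: IH].
Qed.

Definition Qf (S : {set T}) := \sum_(i in S) \sum_(j in ~: S) pi i * P i j.

Lemma exit (S : {set T}) t : \sum_(j in ~: S) fS S t j <= t%:R * Qf S.
Proof.
elim: t => [|t IH].
  rewrite mul0r big1 // => j; rewrite in_setC => jS; rewrite /fS big1 // => x xS /=.
  have -> : (x == j) = false by apply/negbTE; apply: contraNneq jS => <-.
  by rewrite mulr0.
have e : \sum_(j in ~: S) fS S t.+1 j = \sum_k fS S t k * \sum_(j in ~: S) P k j.
  under eq_bigr => j _ do rewrite fS_step.
  rewrite exchange_big /=; apply: eq_bigr => k _; by rewrite mulr_sumr.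
rewrite e (split_sum _ S) -natr1 mulrDl mul1r [X in _ <= X]addrC.
apply: lerD.
  rewrite /Qf; apply: ler_sum => k _; rewrite -mulr_sumr; apply: ler_wpM2r; last exact: fS_le.
  by apply: sumr_ge0 => j _; case: sP.
apply: le_trans IH; apply: ler_sum => k _.
rewrite -[X in _ <= X]mulr1; apply: ler_wpM2l; first exact: fS_ge0.
case: sP => p0 p1; rewrite -(p1 k) (split_sum _ S) lerDr.
by apply: sumr_ge0.
Qed.

Lemma lower (S : {set T}) x t eps : var_dist (Ppow P t x) pi <= eps ->
  prob pi (~: S) - eps <= \sum_(j in ~: S) Ppow P t x j.
Proof.
rewrite /var_dist /prob => hv.
have h1 := Ppow_sum1 sP t x; rewrite (split_sum _ S) in h1.
have h2 : \sum_j pi j = 1 by case: st.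
rewrite (split_sum _ S) in h2.
have h3 : \sum_j `|Ppow P t x j - pi j| = \sum_(j in S) `|Ppow P t x j - pi j| + \sum_(j in ~: S) `|Ppow P t x j - pi j| by apply: split_sum.
have a1 : \sum_(j in ~: S) pi j - \sum_(j in ~: S) Ppow P t x j <= \sum_(j in ~: S) `|Ppow P t x j - pi j|.
  rewrite -sumrB; apply: ler_sum => j _; rewrite distrC; exact: ler_norm.
have a2 : \sum_(j in S) Ppow P t x j - \sum_(j in S) pi j <= \sum_(j in S) `|Ppow P t x j - pi j|.
  rewrite -sumrB; apply: ler_sum => j _; exact: ler_norm.
move: hv; rewrite h3; lra.
Qed.

Lemma key (S : {set T}) t eps : (forall x, x \in S -> var_dist (Ppow P t x) pi <= eps) ->
  prob pi S * (prob pi (~: S) - eps) <= t%:R * Qf S.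
Proof.
move=> hx; apply: le_trans (exit S t).
rewrite /prob mulr_suml.
apply: (@le_trans _ _ (\sum_(x in S) pi x * \sum_(j in ~: S) Ppow P t x j)).
  apply: ler_sum => x xS; apply: ler_wpM2l; [by case: st | exact: lower (hx x xS)].
rewrite /fS exchange_big /=; apply: ler_sum => x _; rewrite mulr_sumr; exact: lexx.
Qed.

End Main.

Unset Implicit Arguments.

Theorem theorem17 (R : realType) (T : finType) (P : T -> T -> R) (pi : T -> R) :
  ergodic P -> stationary P pi ->
  forall S : {set T}, 0 < prob pi S < 1 ->
    (2^-1 - (2 * expR 1)^-1) / (mixing_time P pi (2 * expR 1)^-1)%:R
      <= conductance_S P pi S.
Proof.
move=> erg st S /andP [p0 p1].
have sP : stochastic P by case: erg.
have e2 : 2 <= expR 1 :> R by have := expR_ge1Dx (1:R); lra.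
have eps0 : 0 < (2 * expR 1)^-1 :> R by rewrite invr_gt0 mulr_gt0 // expR_gt0.
have epsle : (2 * expR 1)^-1 <= 4^-1 :> R.
  rewrite lef_pV2 ?posrE ?mulr_gt0 ?expR_gt0 //; lra.
set eps := (2 * expR 1)^-1 in eps0 epsle *.
set tau := mixing_time P pi eps.
have hx : forall x, var_dist (Ppow P tau x) pi <= eps.
  move=> x; apply: (mix_ok erg st) => //; exact: (leq_bigmax x).
have k1 := key erg st (S := S) (fun x _ => hx x).
have k2 := key erg st (S := ~: S) (fun x _ => hx x).
have fl := flow erg st S.
rewrite /Qf setCK -fl -/(Qf P pi S) in k2.
have pq : prob pi S + prob pi (~: S) = 1.
  by rewrite /prob -split_sum; case: st.
rewrite /conductance_S -fl -/(Qf P pi S).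
have Q0 : 0 <= Qf P pi S.
  apply: sumr_ge0 => i _; apply: sumr_ge0 => j _; apply: mulr_ge0; [by case: st | by case: sP].
set Q := Qf P pi S in k1 k2 Q0 *.
set p := prob pi S in k1 k2 pq p0 p1 *.
set q := prob pi (~: S) in k1 k2 pq *.
case: (posnP tau) => [t0 | tpos].
  rewrite t0 invr0 mulr0; apply: divr_ge0; first lra.
  apply: mulr_ge0; [apply: mulr_ge0|]; lra.
have tpos' : 0 < (tau%:R : R) by rewrite ltr0n.
have pq0 : 0 < 2 * p * q by apply: mulr_gt0; [apply: mulr_gt0|]; lra.
rewrite ler_pdivrMr // mulrAC ler_pdivlMr //.
have [hp|hp] := lerP p (2^-1).
  have h : 0 <= p * ((2^-1 + eps) * q - eps) by apply: mulr_ge0; nra.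
  nra.
have h : 0 <= q * ((2^-1 + eps) * p - eps) by apply: mulr_ge0; nra.
nra.
Qed.
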